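(* Let $G$ be a strongly regular graph with parameters $(n,d,\lambda,\mu)$ and let $t=\sqrt{(\mu-\lambda)^2+4(d-\mu)}$. Then $\chi_v(G)=1+\frac{2d}{t+\mu-\lambda}=\chi_{sv}(G)$ and $\chi_v(\overline{G})=\frac{n(t+\mu-\lambda)}{2d+t+\mu-\lambda}=\chi_{sv}(\overline{G})$. Consequently $\chi_v(\overline{G})=\frac{n}{\chi_v(G)}$ and $\chi_{sv}(\overline{G})=\frac{n}{\chi_{sv}(G)}$.
   Context: A strongly regular graph with parameters $(n,d,\lambda,\mu)$ is a $d$-regular graph on $n$ vertices, neither complete nor edgeless, in which adjacent vertices have exactly $\lambda$ common neighbours and distinct nonadjacent vertices exactly $\mu$ common neighbours; $\overline{G}$ is the complement. For a graph on $n$ vertices with at least one edge, a vector $t$-coloring ($t\ge2$) assigns unit vectors $u_i\in\mathbb R^n$ to vertices with $u_i^{\mathrm T}u_j\le-\frac1{t-1}$ for every edge $\{i,j\}$, and a strict vector $t$-coloring requires equality on every edge; $\chi_v$ and $\chi_{sv}$ are the smallest $t\ge2$ admitting a vector, resp. strict vector, $t$-coloring (both equal $1$ for edgeless graphs). *)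

(* Defs.v *)
From HB Require Import structures.
From mathcomp Require Import all_boot all_order all_algebra.
From mathcomp Require Import boolp classical_sets reals.
Set Implicit Arguments. Unset Strict Implicit. Unset Printing Implicit Defensive.
Import Order.TTheory GRing.Theory Num.Theory.
Local Open Scope ring_scope.
Local Open Scope classical_set_scope.

Definition simple_graph (T : finType) (e : rel T) : Prop :=
  (forall x y, e x y = e y x) /\ (forall x, ~~ e x x).

Definition compl_graph (T : finType) (e : rel T) : rel T :=
  fun x y => (x != y) && ~~ e x y.

Definition has_edge (T : finType) (e : rel T) : Prop := exists x y, e x y.

Definition srg (T : finType) (e : rel T) (n d lam mu : nat) : Prop :=
  simple_graph e /\
  #|T| = n /\
  (forall x, #|[set y | e x y]| = d) /\
  has_edge e /\
  (exists x y, (x != y) && ~~ e x y) /\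
  (forall x y, e x y -> #|[set z | e x z && e y z]| = lam) /\
  (forall x y, x != y -> ~~ e x y -> #|[set z | e x z && e y z]| = mu).

Definition dotv (R : realType) (n : nat) (u v : 'cV[R]_n) : R :=
  \sum_(i < n) u i 0 * v i 0.

Definition vector_coloring (R : realType) (T : finType) (e : rel T) (t : R) : Prop :=
  exists u : T -> 'cV[R]_#|T|,
    (forall i, dotv (u i) (u i) = 1) /\
    (forall i j, e i j -> dotv (u i) (u j) <= - (t - 1)^-1).

Definition strict_vector_coloring (R : realType) (T : finType) (e : rel T) (t : R) : Prop :=
  exists u : T -> 'cV[R]_#|T|,
    (forall i, dotv (u i) (u i) = 1) /\
    (forall i j, e i j -> dotv (u i) (u j) = - (t - 1)^-1).

Definition chi_v (R : realType) (T : finType) (e : rel T) : R :=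
  if `[< has_edge e >] then inf [set t : R | 2 <= t /\ vector_coloring e t]
  else 1.

Definition chi_sv (R : realType) (T : finType) (e : rel T) : R :=
  if `[< has_edge e >] then inf [set t : R | 2 <= t /\ strict_vector_coloring e t]
  else 1.

(* Main.v *)
Require Import Defs.
From HB Require Import structures.
From mathcomp Require Import all_boot all_order all_algebra.
From mathcomp Require Import boolp classical_sets reals.
From mathcomp Require Import ring lra.
Import Order.TTheory GRing.Theory Num.Theory.
Local Open Scope ring_scope.

Definition adj (R : realType) {T : finType} (e : rel T) (x y : T) : R := (e x y)%:R.
Definition dlt (R : realType) {T : finType} (x y : T) : R := (x == y)%:R.

Lemma sum_dlt (R : realType) (T : finType) (i : T) (f : T -> R) :
  \sum_x dlt R x i * f x = f i.
Proof.
rewrite (bigD1 i) //= /dlt eqxx mul1r big1 ?addr0 // => x /negbTE ->.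
by rewrite mul0r.
Qed.

Lemma sum_lin (R : realType) (T : finType) (e : rel T) (D L M : R)
  (Hsym : forall x y, e x y = e y x)
  (Hreg : forall x, \sum_y adj R e x y = D)
  (Hsq : forall x z, \sum_y adj R e x y * adj R e y z =
          M + (D - M) * dlt R x z + (L - M) * adj R e x z)
  (p q w p' q' w' : R) (i j : T) :
  \sum_x (p * dlt R x i + q + w * adj R e x i) *
         (p' * dlt R x j + q' + w' * adj R e x j) =
  (p * p' + w * w' * (D - M)) * dlt R i j
  + (p * w' + w * p' + w * w' * (L - M)) * adj R e i j
  + (p * q' + q * p' + q * q' * #|T|%:R + q * w' * D + w * q' * D + w * w' * M).
Proof.
have adjC : forall x y : T, adj R e x y = adj R e y x by move=> x y; rewrite /adj Hsym.
have dltC : forall x y : T, dlt R x y = dlt R y x.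
  by move=> x y; rewrite /dlt eq_sym.
have E : forall x, (p * dlt R x i + q + w * adj R e x i) *
         (p' * dlt R x j + q' + w' * adj R e x j) =
   p * p' * (dlt R x i * dlt R x j) + p * q' * (dlt R x i * 1)
   + p * w' * (dlt R x i * adj R e x j) + q * p' * (dlt R x j * 1)
   + q * q' * 1 + q * w' * adj R e j x + w * p' * (dlt R x j * adj R e x i)
   + w * q' * adj R e i x + w * w' * (adj R e i x * adj R e x j).
  move=> x; rewrite (adjC x i) (adjC x j); ring.
rewrite (eq_bigr _ (fun x _ => E x)) !big_split /= -!mulr_sumr !sum_dlt.
rewrite !Hreg Hsq sumr_const.
idtac.
idtac.
rewrite (adjC j i). rewrite cardT -cardE.
ring.
Qed.
Arguments sum_lin {R T e D L M}.

Lemma gram_psd (R : realType) (T : finType) (u : T -> 'cV[R]_#|T|) (w : T -> R) :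
  0 <= \sum_i \sum_j w i * w j * dotv (u i) (u j).
Proof.
have -> : \sum_i \sum_j w i * w j * dotv (u i) (u j) =
   \sum_(l < #|T|) (\sum_i w i * u i l 0) * (\sum_j w j * u j l 0).
  have E : forall l : 'I_#|T|, (\sum_i w i * u i l 0) * (\sum_j w j * u j l 0) =
     \sum_i \sum_j (w i * u i l 0) * (w j * u j l 0).
    by move=> l; rewrite big_distrl; apply: eq_bigr => i _; rewrite big_distrr.
  rewrite (eq_bigr _ (fun l _ => E l)).
  rewrite [RHS]exchange_big; apply: eq_bigr => i _ /=.
  rewrite [RHS]exchange_big; apply: eq_bigr => j _ /=.
  rewrite /dotv mulr_sumr; apply: eq_bigr => l _; ring.
by apply: sumr_ge0 => l _; rewrite -expr2 sqr_ge0.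
Qed.

Lemma dot_pair (R : realType) (n : nat) (u v : 'cV[R]_n) :
  0 <= dotv u u + 2 * dotv u v + dotv v v.
Proof.
have -> : dotv u u + 2 * dotv u v + dotv v v = \sum_(l < n) (u l 0 + v l 0) ^+ 2.
  rewrite /dotv mulr_sumr -!big_split /=; apply: eq_bigr => l _; ring.
by apply: sumr_ge0 => l _; rewrite sqr_ge0.
Qed.

Lemma sum2_dlt (R : realType) (T : finType) (X : T -> T -> R) :
  \sum_i \sum_j dlt R i j * X i j = \sum_i X i i.
Proof.
apply: eq_bigr => i _.
have -> : \sum_j dlt R i j * X i j = \sum_j dlt R j i * X i j.
  by apply: eq_bigr => j _; rewrite /dlt eq_sym.
by rewrite sum_dlt.
Qed.

Lemma lower (R : realType) (T : finType) (e : rel T) (D L M r s : R)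
  (Hsym : forall x y, e x y = e y x)
  (Hreg : forall x, \sum_y adj R e x y = D)
  (Hsq : forall x z, \sum_y adj R e x y * adj R e y z =
          M + (D - M) * dlt R x z + (L - M) * adj R e x z)
  (hLM : L - M = r + s) (hDM : D - M = - (r * s)) (hrs : s < r) (hs : s < 0) (hD : 0 < D)
  (hN : 0 < #|T|%:R :> R) (hmn : M * #|T|%:R = (D - r) * (D - s))
  (tau : R) (htau : 2 <= tau) (u : T -> 'cV[R]_#|T|)
  (hu1 : forall i, dotv (u i) (u i) = 1)
  (hu2 : forall i j, e i j -> dotv (u i) (u j) <= - (tau - 1)^-1) :
  1 - D / s <= tau.
Proof.
set N : R := #|T|%:R in hN hmn *.
set g := (D - s) / N.
set c := - s * - g + - g * - s + - g * - g * N + - g * 1 * D + 1 * - g * D + 1 * 1 * M.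
have hc : c <= 0.
  have hcN : c * N = M * N - (D - s) ^+ 2.
    rewrite /c /g; field; lra.
  have : c * N <= 0.
    rewrite hcN hmn.
    have hp : 0 < (D - s) * (r - s) by apply: mulr_gt0; lra.
    nra.
  by rewrite pmulr_lle0.
set K := fun k i => - s * dlt R k i + - g + 1 * adj R e k i.
have HK : forall i j, \sum_k K k i * K k j = (r - s) * adj R e i j - (r - s) * s * dlt R i j + c.
  move=> i j; rewrite /K (sum_lin Hsym Hreg Hsq) -/N -/c.
  have -> : - s * - s + 1 * 1 * (D - M) = - ((r - s) * s) by rewrite hDM; ring.
  have -> : - s * 1 + 1 * - s + 1 * 1 * (L - M) = r - s by rewrite hLM; ring.
  ring.
set X := fun i j => dotv (u i) (u j).
have G1 : 0 <= \sum_k \sum_i \sum_j K k i * K k j * X i j.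
  by apply: sumr_ge0 => k _; apply: gram_psd.
have G2 : 0 <= \sum_i \sum_j 1 * 1 * X i j by exact: (@gram_psd R T u (fun _ => 1)).
have E : \sum_k \sum_i \sum_j K k i * K k j * X i j =
   (r - s) * (\sum_i \sum_j adj R e i j * X i j) + (- ((r - s) * s)) * N
   + c * (\sum_i \sum_j 1 * 1 * X i j).
  rewrite exchange_big.
  have -> : N = \sum_i \sum_j dlt R i j * X i j.
    rewrite sum2_dlt /X; under eq_bigr => i _ do rewrite hu1.
    by rewrite sumr_const /N cardT -cardE.
  rewrite !mulr_sumr -!big_split /=; apply: eq_bigr => i _.
  rewrite exchange_big !mulr_sumr -!big_split /=; apply: eq_bigr => j _.
  rewrite -mulr_suml HK; ring.
set Sa := \sum_i \sum_j adj R e i j * X i j.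
have hSa : Sa <= - (tau - 1)^-1 * N * D.
  have -> : - (tau - 1)^-1 * N * D = \sum_(i : T) \sum_(j : T) adj R e i j * - (tau - 1)^-1.
    under eq_bigr => i _ do rewrite -mulr_suml Hreg.
    by rewrite sumr_const /N cardT -cardE; rewrite -mulr_natr; ring.
  apply: ler_sum => i _; apply: ler_sum => j _.
  rewrite /adj; case: (boolP (e i j)) => h /=.
    by rewrite !mul1r hu2.
  by rewrite !mul0r.
have hSa2 : s * N <= Sa.
  have : 0 <= (r - s) * (Sa - s * N).
    have := G1; rewrite E -/Sa.
    have : c * (\sum_i \sum_j 1 * 1 * X i j) <= 0 by rewrite mulr_le0_ge0.
    move=> h1 h2; lra.
  rewrite pmulr_rge0; last by lra.
  lra.
have ht1 : 0 < tau - 1 by lra.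
set k := (tau - 1)^-1.
have hk : k * (tau - 1) = 1 by rewrite /k mulVf //; lra.
have hkp : 0 < k by rewrite /k invr_gt0.
have h1 : s <= - k * D.
  have e1 : - k * N * D = - k * D * N by ring.
  have : s * N <= - k * D * N by rewrite -e1; apply: le_trans hSa2 hSa.
  by rewrite ler_pM2r.
have h2 : s * (tau - 1) <= - D.
  have : s * (tau - 1) <= - k * D * (tau - 1) by rewrite ler_pM2r.
  have -> : - k * D * (tau - 1) = - D.
    have -> : - k * D * (tau - 1) = - D * (k * (tau - 1)) by ring.
    by rewrite hk mulr1.
  by [].
set v := D / s.
have hv : D = v * s by rewrite /v mulfVK //; lra.
rewrite hv in h2; nra.
Qed.

Lemma upper (R : realType) (T : finType) (e : rel T) (D L M r s : R)
  (Hsym : forall x y, e x y = e y x) (Hirr : forall x, ~~ e x x)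
  (Hreg : forall x, \sum_y adj R e x y = D)
  (Hsq : forall x z, \sum_y adj R e x y * adj R e y z =
          M + (D - M) * dlt R x z + (L - M) * adj R e x z)
  (hLM : L - M = r + s) (hDM : D - M = - (r * s)) (hrs : s < r) (hs : s < 0)
  (hD : 0 < D) (hr : 0 <= r)
  (hN : 1 <= #|T|%:R :> R) (hmn : M * #|T|%:R = (D - r) * (D - s))
  (Hedge : exists x y, e x y) :
  strict_vector_coloring e (1 - D / s) /\ 2 <= 1 - D / s.
Proof.
set N : R := #|T|%:R in hN hmn *.
have hN0 : N != 0 by rewrite gt_eqF //; lra.
set c0 := (D - r) / N.
set F := fun x y => r * dlt R x y + c0 + -1 * adj R e x y.
have hFd : 0 < r + c0.
  have : (r + c0) * N = r * (N - 1) + D by rewrite /c0; field.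
  have : 0 <= r * (N - 1) by apply: mulr_ge0; lra.
  move=> h1 h2.
  have : 0 < (r + c0) * N by lra.
  by rewrite pmulr_lgt0 //; lra.
have HF : forall i j, \sum_x F x i * F x j = (r - s) * F i j.
  move=> i j; rewrite /F (sum_lin Hsym Hreg Hsq) -/N.
  have -> : r * r + -1 * -1 * (D - M) = (r - s) * r by rewrite hDM; ring.
  have -> : r * -1 + -1 * r + -1 * -1 * (L - M) = (r - s) * -1 by rewrite hLM; ring.
  have -> : r * c0 + c0 * r + c0 * c0 * N + c0 * -1 * D + -1 * c0 * D + -1 * -1 * M
            = (r - s) * c0.
    have hM : M = (D - r) * (D - s) / N by rewrite -hmn mulfK.
    by rewrite hM /c0; field.
  ring.
set S := Num.sqrt ((r - s) * (r + c0)).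
have hS2 : S ^+ 2 = (r - s) * (r + c0).
  by rewrite /S sqr_sqrtr //; apply: mulr_ge0; lra.
have hS : 0 < S by rewrite /S sqrtr_gt0; apply: mulr_gt0; lra.
pose u := fun i : T => \col_(l < #|T|) (F (enum_val l) i / S).
have hdot : forall i j, dotv (u i) (u j) = F i j / (r + c0).
  move=> i j; rewrite /dotv.
  under eq_bigr do rewrite !mxE.
  rewrite -(big_enum_val (fun x => F x i / S * (F x j / S))) /=.
  have -> : \sum_(x in T) F x i / S * (F x j / S) = (\sum_x F x i * F x j) / S ^+ 2.
    rewrite mulr_suml; apply: eq_bigr => x _; field; lra.
  rewrite HF hS2; field; lra.
have hFii : forall i, F i i = r + c0.
  by move=> i; rewrite /F /dlt /adj eqxx (negbTE (Hirr i)) /= ?mulr1n ?mulr0n; ring.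
have hFij : forall i j, e i j -> F i j = c0 - 1.
  move=> i j h; rewrite /F /dlt /adj h.
  have -> : (i == j) = false by apply/negbTE; apply: contraTneq h => ->; apply: Hirr.
  rewrite /= ?mulr1n ?mulr0n; ring.
have hval : (c0 - 1) / (r + c0) = s / D.
  apply/eqP; rewrite eqr_div; try (apply/eqP; lra).
  apply/eqP.
  have hM' : M = D + r * s by lra.
  have key : (c0 - 1) * D - s * (r + c0) = ((D - r) * (D - s) - M * N) / N.
    by rewrite hM' /c0; field.
  rewrite hmn subrr mul0r in key; lra.
split.
  exists u; split.
    by move=> i; rewrite hdot hFii divff //; lra.
  move=> i j h; rewrite hdot hFij // hval; field.
  by apply/and3P; split; apply/eqP; lra.
case: Hedge => i [j h].
have := @dot_pair R _ (u i) (u j).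
rewrite !hdot !hFii hFij // hval divff; last by lra.
move=> hp.
have h1 : - D <= s.
  have : -1 <= s / D by lra.
  by rewrite ler_pdivlMr // mulN1r.
set w := D / s.
have hw : D = w * s by rewrite /w mulfVK //; lra.
rewrite hw in h1; nra.
Qed.

Lemma facts (R : realType) (T : finType) (e : rel T) (D L M : R)
  (Hsym : forall x y, e x y = e y x) (Hirr : forall x, ~~ e x x)
  (Hreg : forall x, \sum_y adj R e x y = D)
  (Hsq : forall x z, \sum_y adj R e x y * adj R e y z =
          M + (D - M) * dlt R x z + (L - M) * adj R e x z)
  (Hedge : exists x y, e x y) (Hnon : exists x y, (x != y) && ~~ e x y) :
  [/\ 1 <= D, L <= D - 1, M <= D,
      D * D = D + L * D + M * (#|T|%:R - 1 - D) & 1 <= #|T|%:R :> R].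
Proof.
have a01 : forall x y : T, 0 <= adj R e x y <= 1.
  by move=> x y; rewrite /adj; case: (e x y); rewrite /= ?mulr1n ?mulr0n ?ler01 ?lexx.
have dl0 : forall x y : T, x != y -> dlt R x y = 0.
  by move=> x y h; rewrite /dlt (negbTE h).
case: Hedge => x0 [y0 h0].
have hxy0 : x0 != y0 by apply: contraTneq h0 => ->; apply: Hirr.
have hN : 1 <= #|T|%:R :> R.
  have : (0 < #|T|)%N by apply/card_gt0P; exists x0.
  by rewrite ler1n.
have hD : 1 <= D.
  rewrite -(Hreg x0) (bigD1 y0) //= {1}/adj h0 /=.
  have : 0 <= \sum_(i | i != y0) adj R e x0 i.
    by apply: sumr_ge0 => i _; case/andP: (a01 x0 i).
  lra.
have hL : L <= D - 1.
  have ha : adj R e x0 y0 = 1 by rewrite /adj h0.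
  have := Hsq x0 y0; rewrite dl0 // ha => hs.
  have : \sum_y adj R e x0 y * adj R e y y0 <= \sum_y (adj R e x0 y - dlt R y y0 * adj R e x0 y).
    apply: ler_sum => y _; rewrite /dlt; case: eqVneq => [->|hy] /=.
      by rewrite /adj (negbTE (Hirr y0)) /=; lra.
    have := a01 x0 y; have := a01 y y0; rewrite /adj => /andP[? ?] /andP[? ?]; nra.
  rewrite sumrB sum_dlt Hreg ha hs; lra.
have hM : M <= D.
  case: Hnon => x [z /andP[hxz hn]].
  have ha : adj R e x z = 0 by rewrite /adj (negbTE hn).
  have := Hsq x z; rewrite dl0 // ha => hs.
  have : \sum_y adj R e x y * adj R e y z <= \sum_y adj R e x y.
    apply: ler_sum => y _; have := a01 x y; have := a01 y z; case/andP=> ? ? /andP[? ?]; nra.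
  rewrite hs Hreg; lra.
split => //.
have E1 : \sum_z \sum_y adj R e x0 y * adj R e y z = D * D.
  rewrite exchange_big /=.
  under eq_bigr => y _ do rewrite -mulr_sumr Hreg.
  by rewrite -mulr_suml Hreg.
have E2 : \sum_z (M + (D - M) * dlt R x0 z + (L - M) * adj R e x0 z)
          = M * #|T|%:R + (D - M) + (L - M) * D.
  rewrite !big_split /= -!mulr_sumr Hreg sumr_const cardT -cardE.
  have -> : \sum_z dlt R x0 z = \sum_z dlt R z x0 * 1.
    by apply: eq_bigr => z _; rewrite /dlt eq_sym mulr1.
  rewrite sum_dlt -mulr_natr; ring.
have : \sum_z \sum_y adj R e x0 y * adj R e y z = \sum_z (M + (D - M) * dlt R x0 z + (L - M) * adj R e x0 z).
  by apply: eq_bigr => z _; rewrite Hsq.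
rewrite E1 E2 => ->; ring.
Qed.

Arguments facts {R T e D L M}.
Arguments upper {R T e D L M r s}.
Arguments lower {R T e D L M r s} Hsym Hreg Hsq hLM hDM hrs hs hD hN hmn {tau} htau {u} hu1 hu2.

Lemma core (R : realType) (T : finType) (e : rel T) (D L M : R)
  (Hsym : forall x y, e x y = e y x) (Hirr : forall x, ~~ e x x)
  (Hreg : forall x, \sum_y adj R e x y = D)
  (Hsq : forall x z, \sum_y adj R e x y * adj R e y z =
          M + (D - M) * dlt R x z + (L - M) * adj R e x z)
  (Hedge : exists x y, e x y) (Hnon : exists x y, (x != y) && ~~ e x y) :
  let t := Num.sqrt ((M - L) ^+ 2 + 4 * (D - M)) in
  chi_v R e = 1 + 2 * D / (t + M - L) /\ chi_sv R e = 1 + 2 * D / (t + M - L).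
Proof.
move=> t.
have [hD hL hM hrel hN] := facts Hsym Hirr Hreg Hsq Hedge Hnon.
have harg : 0 < (M - L) ^+ 2 + 4 * (D - M).
  have := sqr_ge0 (M - L).
  case: (ltrP (D - M) 1) => ha; last by lra.
  have hb : 1 - (D - M) <= M - L by lra.
  have : (1 - (D - M)) ^+ 2 <= (M - L) ^+ 2.
    by rewrite ler_sqr ?nnegrE; lra.
  nra.
have ht0 : 0 < t by rewrite /t sqrtr_gt0.
have htt : t ^+ 2 = (M - L) ^+ 2 + 4 * (D - M) by rewrite /t sqr_sqrtr //; lra.
set r := (L - M + t) / 2.
set s := (L - M - t) / 2.
have hLM : L - M = r + s by rewrite /r /s; field.
have hDM : D - M = - (r * s).
  have -> : r * s = ((L - M) ^+ 2 - t ^+ 2) / 4 by rewrite /r /s; field.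
  by rewrite htt; field.
have hrs : s < r by rewrite /r /s; lra.
have hs : s < 0.
  suff : L - M < t by rewrite /s; lra.
  case: (ltrP (L - M) 0) => h; first by lra.
  have : (L - M) ^+ 2 < t ^+ 2 by rewrite htt; lra.
  rewrite ltr_sqr ?nnegrE //; lra.
have hr : 0 <= r.
  suff : M - L <= t by rewrite /r; lra.
  case: (ltrP (M - L) 0) => h; first by lra.
  have : (M - L) ^+ 2 <= t ^+ 2 by rewrite htt; lra.
  rewrite ler_sqr ?nnegrE //; lra.
have hmn : M * #|T|%:R = (D - r) * (D - s).
  have -> : (D - r) * (D - s) = D * D - (r + s) * D + r * s by ring.
  rewrite -hLM.
  have -> : r * s = M - D by rewrite -[M - D]opprB hDM opprK.
  rewrite hrel; ring.
have htau : 1 + 2 * D / (t + M - L) = 1 - D / s.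
  have hs2 : L - M - t < 0 by move: hs; rewrite /s; lra.
  rewrite /s; field; apply/andP; split; apply/eqP; lra.
have hD0 : 0 < D by lra.
have [hsv h2] := upper Hsym Hirr Hreg Hsq hLM hDM hrs hs hD0 hr hN hmn Hedge.
have hlow : forall tau, 2 <= tau -> vector_coloring e tau -> 1 - D / s <= tau.
  move=> tau h [u [hu1 hu2]].
  have hN0 : 0 < #|T|%:R :> R by lra.
  exact: (lower Hsym Hreg Hsq hLM hDM hrs hs hD0 hN0 hmn h hu1 hu2).
have hvc : vector_coloring e (1 - D / s).
  case: hsv => u [hu1 hu2]; exists u; split => // i j h.
  by rewrite hu2.
have hed : `[< has_edge e >] = true by apply/asboolP.
rewrite htau /chi_v /chi_sv hed; split.
  apply: le_anti; apply/andP; split.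
    apply: (ge_inf _ (conj h2 hvc)).
    by exists (1 - D / s) => y [hy1 hy2]; apply: hlow.
  apply: lb_le_inf; first by exists (1 - D / s).
  by move=> y [hy1 hy2]; apply: hlow.
apply: le_anti; apply/andP; split.
  apply: (ge_inf _ (conj h2 hsv)).
  exists (1 - D / s) => y [hy1 [u [hu1 hu2]]]; apply: hlow => //.
  by exists u; split => // i j h; rewrite hu2.
apply: lb_le_inf; first by exists (1 - D / s).
move=> y [hy1 [u [hu1 hu2]]]; apply: hlow => //.
by exists u; split => // i j h; rewrite hu2.
Qed.

Lemma tfacts (R : realType) (D L M : R) (hL : L <= D - 1) (hM : M <= D) :
  let t := Num.sqrt ((M - L) ^+ 2 + 4 * (D - M)) in
  [/\ t ^+ 2 = (M - L) ^+ 2 + 4 * (D - M), L - M < t & M - L <= t].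
Proof.
move=> t.
have harg : 0 < (M - L) ^+ 2 + 4 * (D - M).
  have := sqr_ge0 (M - L).
  case: (ltrP (D - M) 1) => ha; last by lra.
  have hb : 1 - (D - M) <= M - L by lra.
  have : (1 - (D - M)) ^+ 2 <= (M - L) ^+ 2.
    by rewrite ler_sqr ?nnegrE; lra.
  nra.
have ht0 : 0 < t by rewrite /t sqrtr_gt0.
have htt : t ^+ 2 = (M - L) ^+ 2 + 4 * (D - M) by rewrite /t sqr_sqrtr //; lra.
split => //.
  case: (ltrP (L - M) 0) => h; first by lra.
  have : (L - M) ^+ 2 < t ^+ 2 by rewrite htt; lra.
  rewrite ltr_sqr ?nnegrE //; lra.
case: (ltrP (M - L) 0) => h; first by lra.
have : (M - L) ^+ 2 <= t ^+ 2 by rewrite htt; lra.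
rewrite ler_sqr ?nnegrE //; lra.
Qed.

Arguments core {R T e D L M}.

Lemma compl_alg (R : realType) (N D L M t : R)
  (htt : t ^+ 2 = (M - L) ^+ 2 + 4 * (D - M))
  (hrel : D * D = D + L * D + M * (N - 1 - D))
  (h1 : 0 < t + L - M + 2) (h2 : 0 < 2 * D + t + M - L) :
  1 + 2 * (N - D - 1) / (t + (N - 2 * D + L) - (N - 2 * D + M - 2))
  = N * (t + M - L) / (2 * D + t + M - L).
Proof.
have -> : t + (N - 2 * D + L) - (N - 2 * D + M - 2) = t + L - M + 2 by ring.
apply/eqP; rewrite -subr_eq0; apply/eqP.
have -> : 1 + 2 * (N - D - 1) / (t + L - M + 2) - N * (t + M - L) / (2 * D + t + M - L)
  = ((1 - N) * (t ^+ 2 - (M - L) ^+ 2 - 4 * (D - M))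
     - 4 * (D * D - (D + L * D + M * (N - 1 - D))))
    / ((t + L - M + 2) * (2 * D + t + M - L)).
  by field; apply/andP; split; apply/eqP; lra.
rewrite htt hrel !subrr.
have -> : (M - L) ^+ 2 + 4 * (D - M) - (M - L) ^+ 2 - 4 * (D - M) = 0 by ring.
by rewrite mulr0 mulr0 subrr mul0r.
Qed.

Theorem mainTheorem10 (R : realType) (T : finType) (e : rel T) (n d lam mu : nat) :
  srg e n d lam mu ->
  let t : R := Num.sqrt ((mu%:R - lam%:R) ^+ 2 + 4 * (d%:R - mu%:R)) in
  (chi_v R e = 1 + 2 * d%:R / (t + mu%:R - lam%:R) /\
   chi_sv R e = 1 + 2 * d%:R / (t + mu%:R - lam%:R)) /\
  (chi_v R (compl_graph e) =
     n%:R * (t + mu%:R - lam%:R) / (2 * d%:R + t + mu%:R - lam%:R) /\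
   chi_sv R (compl_graph e) =
     n%:R * (t + mu%:R - lam%:R) / (2 * d%:R + t + mu%:R - lam%:R)) /\
  (chi_v R (compl_graph e) = n%:R / chi_v R e /\
   chi_sv R (compl_graph e) = n%:R / chi_sv R e).
Proof.
move=> [[Hsym Hirr] [hn [Hdeg [Hedge [Hnon [Hlam Hmu]]]]]] t.
have cnt : forall P : pred T, \sum_y ((P y)%:R : R) = #|[set y | P y]%classic|%:R.
  move=> P.
  transitivity (\sum_(y | P y) (1 : R)).
    by rewrite [RHS]big_mkcond; apply: eq_bigr => y _; case: (P y).
  rewrite sumr_const; congr (_ *+ _); apply: eq_card => y.
  by apply/idP/idP => [h|h]; [apply: mem_set | move/set_mem: h].
  
have Hreg : forall x, \sum_y adj R e x y = d%:R.
  by move=> x; rewrite /adj (cnt (fun y => e x y)) Hdeg.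
have Hsq : forall x z, \sum_y adj R e x y * adj R e y z =
    mu%:R + (d%:R - mu%:R) * dlt R x z + (lam%:R - mu%:R) * adj R e x z.
  move=> x z.
  have -> : \sum_y adj R e x y * adj R e y z = \sum_y ((e x y && e z y))%:R.
    apply: eq_bigr => y _; rewrite /adj (Hsym y z).
    by case: (e x y); case: (e z y); rewrite /= ?mulr1n ?mulr0n ?mulr1 ?mulr0.
  rewrite (cnt (fun y => e x y && e z y)) /dlt /adj.
  case: (eqVneq x z) => [<-|hxz].
    have -> : [set y | e x y && e x y]%classic = [set y | e x y]%classic.
      by apply/funext => y /=; rewrite andbb.
    rewrite Hdeg (negbTE (Hirr x)) /= ?mulr1n ?mulr0n; ring.
  case h: (e x z).
    rewrite Hlam //= ?mulr1n ?mulr0n; ring.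
  have hn' : ~~ e x z by rewrite h.
  rewrite (Hmu x z hxz hn') /= ?mulr1n ?mulr0n; ring.
have [hD hL hM hrel hN] := facts Hsym Hirr Hreg Hsq Hedge Hnon.
have [htt hlt hle] := tfacts _ _ _ _ hL hM.
have [c1 c2] := core Hsym Hirr Hreg Hsq Hedge Hnon.
rewrite -/t in c1 c2 htt hlt hle.
set e' := compl_graph e.
have Hsym' : forall x y, e' x y = e' y x.
  by move=> x y; rewrite /e' /compl_graph eq_sym Hsym.
have Hirr' : forall x, ~~ e' x x by move=> x; rewrite /e' /compl_graph eqxx.
have adjc : forall x y, adj R e' x y = 1 - dlt R x y - adj R e x y.
  move=> x y; rewrite /adj /dlt /e' /compl_graph.
  case: (eqVneq x y) => [->|h] /=.
    by rewrite (negbTE (Hirr y)) /= ?mulr1n ?mulr0n; ring.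
  by case: (e x y); rewrite /= ?mulr1n ?mulr0n; ring.
have hT : #|T|%:R = n%:R :> R by rewrite hn.
have Hreg' : forall x, \sum_y adj R e' x y = n%:R - d%:R - 1.
  move=> x; rewrite (eq_bigr _ (fun y _ => adjc x y)) !sumrB sumr_const Hreg.
  have -> : \sum_y dlt R x y = \sum_y dlt R y x * 1.
    by apply: eq_bigr => z _; rewrite /dlt eq_sym mulr1.
  rewrite sum_dlt cardT -cardE -hT; ring.
have Hsq' : forall x z, \sum_y adj R e' x y * adj R e' y z =
    (n%:R - 2 * d%:R + lam%:R)
    + ((n%:R - d%:R - 1) - (n%:R - 2 * d%:R + lam%:R)) * dlt R x z
    + ((n%:R - 2 * d%:R + mu%:R - 2) - (n%:R - 2 * d%:R + lam%:R)) * adj R e' x z.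
  move=> x z.
  have -> : \sum_y adj R e' x y * adj R e' y z =
     \sum_y (-1 * dlt R y x + 1 + -1 * adj R e y x) * (-1 * dlt R y z + 1 + -1 * adj R e y z).
    apply: eq_bigr => y _; rewrite !adjc /adj /dlt (Hsym x y) (eq_sym x y); ring.
  rewrite (sum_lin Hsym Hreg Hsq) adjc hT; ring.
have Hedge' : exists x y, e' x y.
  by case: Hnon => x [y h]; exists x, y; rewrite /e' /compl_graph.
have Hnon' : exists x y, (x != y) && ~~ e' x y.
  case: Hedge => x [y h]; exists x, y.
  have hxy : x != y by apply: contraTneq h => ->; apply: Hirr.
  by rewrite hxy /e' /compl_graph h andbF.
have [c1' c2'] := core Hsym' Hirr' Hreg' Hsq' Hedge' Hnon'.
have harg : ((n%:R - 2 * d%:R + lam%:R) - (n%:R - 2 * d%:R + mu%:R - 2)) ^+ 2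
     + 4 * ((n%:R - d%:R - 1) - (n%:R - 2 * d%:R + lam%:R))
   = (mu%:R - lam%:R) ^+ 2 + 4 * (d%:R - mu%:R) :> R by ring.
rewrite harg -/t in c1' c2'.
rewrite hT in hrel.
have hq : 0 < t + mu%:R - lam%:R by lra.
have hcomp := @compl_alg R n%:R d%:R lam%:R mu%:R t htt hrel (ltac:(lra)) (ltac:(lra)).
rewrite hcomp in c1' c2'.
rewrite -/e' c1 c2 c1' c2'.
do 2 (split; first (split => //)).
split; field; apply/andP; split; apply/eqP; lra.
Qed.
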